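(* With the notation of the context, if $r=\min_h d_h=2$, then the asymptotic threshold satisfies $$G^*(\mathcal C,\boldsymbol\Lambda)\le\frac{k}{2\mathcal B_2},\qquad \mathcal B_2=\sum_{h:\,d_h=2}\Lambda_hB^{(h)}_2,$$ where $B^{(h)}_2$ is the number of weight-2 codewords of $\mathscr C_h$. In particular, for IRSA ($k=1$, $\mathscr C_h$ the length-$h$ repetition code) $G^*(\mathcal C,\boldsymbol\Lambda)\le 1/(2\Lambda_2)$.
   Context: For $h=1,\dots,\theta$, $\mathscr C_h$ is an $(n_h,k)$ binary linear code with minimum distance $d_h\ge2$ and no idle symbols, chosen with probability $\Lambda_h$; $\bar n=\sum_h\Lambda_hn_h$, $R=k/\bar n$. Un-normalized information function $\tilde e^{(h)}_g$: sum over all $g$-subsets of columns of a generator matrix of $\mathscr C_h$ of the rank of the corresponding submatrix ($\tilde e_0=0$). For $G\ge0$ define the recursion $p_\ell=1-\exp\{-\frac{G}{k}\sum_h\Lambda_h\sum_{t=0}^{n_h-1}p_{\ell-1}^t(1-p_{\ell-1})^{n_h-1-t}[(n_h-t)\tilde e^{(h)}_{n_h-t}-(t+1)\tilde e^{(h)}_{n_h-1-t}]\}$, $p_0=1-e^{-G/R}$. The asymptotic threshold is $G^*(\mathcal C,\boldsymbol\Lambda)=\sup\{G\ge0: p_\ell\to0\text{ as }\ell\to\infty\}$. *)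

(* Defs.v *)
From Stdlib Require Import Reals.
From HB Require Import structures.
From mathcomp Require Import all_boot all_order all_algebra.

Set Implicit Arguments.
Unset Strict Implicit.
Unset Printing Implicit Defensive.

Local Open Scope ring_scope.

Definition wt (n : nat) (c : 'rV['F_2]_n) : nat := #|[set j : 'I_n | c ord0 j != 0]|.

Definition is_codeword (k n : nat) (G : 'M['F_2]_(k, n)) (c : 'rV['F_2]_n) : bool :=
  (c <= G)%MS.

(* Minimum distance: least weight of a nonzero codeword (n.+1 if none exists). *)
Definition dmin (k n : nat) (G : 'M['F_2]_(k, n)) : nat :=
  find (fun d => [exists c : 'rV['F_2]_n, [&& c != 0, is_codeword G c & wt c == d]])
       (iota 0%N n.+1).

Definition Bw (k n : nat) (G : 'M['F_2]_(k, n)) (w : nat) : nat :=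
  #|[set c : 'rV['F_2]_n | is_codeword G c && (wt c == w)]|.

Definition colsubset (k n : nat) (G : 'M['F_2]_(k, n)) (S : {set 'I_n}) : 'M['F_2]_(k, #|S|) :=
  colsub (fun i : 'I_#|S| => enum_val i) G.

(* Un-normalized information function e~_g. *)
Definition info (k n : nat) (G : 'M['F_2]_(k, n)) (g : nat) : nat :=
  \sum_(S : {set 'I_n} | #|S| == g) \rank (colsubset G S).

Definition no_idle (k n : nat) (G : 'M['F_2]_(k, n)) : Prop :=
  forall j : 'I_n, col j G != 0.

Local Close Scope ring_scope.
Local Open Scope R_scope.

Definition Rsum (m : nat) (F : 'I_m -> R) : R := \big[Rplus/R0]_(i < m) F i.

Definition nbar (theta : nat) (n : 'I_theta -> nat) (Lam : 'I_theta -> R) : R :=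
  Rsum (fun h => Lam h * INR (n h)).

Definition Phi (theta k : nat) (n : 'I_theta -> nat)
  (Gm : forall h : 'I_theta, 'M['F_2]_(k, n h)) (Lam : 'I_theta -> R) (p : R) : R :=
  Rsum (fun h => Lam h *
    Rsum (fun t : 'I_(n h) =>
      p ^ t * (1 - p) ^ (n h - 1 - t) *
      (INR ((n h - t) * info (Gm h) (n h - t))
       - INR ((t + 1) * info (Gm h) (n h - 1 - t))))).

Fixpoint pseq (theta k : nat) (n : 'I_theta -> nat)
  (Gm : forall h : 'I_theta, 'M['F_2]_(k, n h)) (Lam : 'I_theta -> R) (G : R) (l : nat) : R :=
  match l with
  | O => 1 - exp (- (G / (INR k / nbar n Lam)))
  | S l' => 1 - exp (- (G / INR k) * Phi Gm Lam (pseq Gm Lam G l'))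
  end.

(* Set whose supremum is the asymptotic threshold G*. *)
Definition threshold_set (theta k : nat) (n : 'I_theta -> nat)
  (Gm : forall h : 'I_theta, 'M['F_2]_(k, n h)) (Lam : 'I_theta -> R) : R -> Prop :=
  fun G => 0 <= G /\ Un_cv (pseq Gm Lam G) 0.

Definition calB2 (theta k : nat) (n : 'I_theta -> nat)
  (Gm : forall h : 'I_theta, 'M['F_2]_(k, n h)) (Lam : 'I_theta -> R) : R :=
  Rsum (fun h => if dmin (Gm h) == 2%N then Lam h * INR (Bw (Gm h) 2) else 0).

(* IRSA: index i : 'I_theta is the length-(i+2) repetition code (degree i+2). *)
Definition irsa_len (theta : nat) (i : 'I_theta) : nat := (i + 2)%N.
Definition rep_code (theta : nat) (i : 'I_theta) : 'M['F_2]_(1, irsa_len i) :=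
  const_mx (GRing.one 'F_2).

(* Main.v *)
Require Import Defs.
From Stdlib Require Import Reals Lra Psatz ZArith.
From HB Require Import structures.
From mathcomp Require Import all_boot all_order all_algebra.
From mathcomp Require Import zify.
Set Implicit Arguments. Unset Strict Implicit. Unset Printing Implicit Defensive.
Import GRing.Theory.
Local Open Scope ring_scope.

Lemma F2_nz1 (x : 'F_2) : x != 0 -> x = 1.
Proof. case: x => [[|[|m]] Hm] //= _; first exact: val_inj. Qed.

Section Code.
Variables (k n : nat) (G : 'M['F_2]_(k, n)).

Definition rk (S : {set 'I_n}) := \rank (colsubset G S).

Lemma colrank_le m1 m2 (A : 'M['F_2]_(k, m1)) (B : 'M['F_2]_(k, m2)) :
  (forall j, exists i, col j B = col i A) -> (\rank B <= \rank A)%N.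
Proof.
move=> H; rewrite -mxrank_tr -[X in (_ <= X)%N]mxrank_tr; apply: mxrankS.
apply/row_subP => j; have [i Hi] := H j.
by rewrite -tr_col Hi tr_col row_sub.
Qed.

Lemma col_colsubset S j : col j (colsubset G S) = col (enum_val j) G.
Proof. by apply/matrixP => a b; rewrite !mxE. Qed.

Lemma rk_mono (S T : {set 'I_n}) : T \subset S -> (rk T <= rk S)%N.
Proof.
move=> TS; apply: colrank_le => j.
have jS : enum_val j \in S by apply: (subsetP TS); apply: enum_valP.
exists (enum_rank_in jS (enum_val j)).
by rewrite !col_colsubset enum_rankK_in.
Qed.

Lemma rk_le_k S : (rk S <= k)%N. Proof. exact: rank_leq_row. Qed.
Lemma rk_le_card S : (rk S <= #|S|)%N. Proof. exact: rank_leq_col. Qed.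

Lemma rk_setT : rk setT = \rank G.
Proof.
apply/eqP; rewrite eqn_leq; apply/andP; split; apply: colrank_le => j.
  by exists (enum_val j); rewrite col_colsubset.
have jS : j \in [set: 'I_n] by rewrite in_setT.
by exists (enum_rank_in jS j); rewrite col_colsubset enum_rankK_in.
Qed.

Lemma mul_colsubset (u : 'rV['F_2]_k) (S : {set 'I_n}) i :
  (u *m colsubset G S) 0 i = (u *m G) 0 (enum_val i).
Proof. by rewrite !mxE; apply: eq_bigr => l _; rewrite mxE. Qed.

Lemma rk_lt_codeword (S : {set 'I_n}) : \rank G = k -> (rk S < k)%N ->
  exists c, [/\ c != 0, is_codeword G c & forall j, j \in S -> c 0 j = 0].
Proof.
move=> rG lt.
set M := colsubset G S.
have kz : kermx M != 0.
  by rewrite -mxrank_eq0 mxrank_ker -lt0n subn_gt0.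
set u := nz_row (kermx M).
have uM : u *m M = 0 by apply/eqP; rewrite -sub_kermx nz_row_sub.
exists (u *m G); split.
- have fr : row_free G by rewrite /row_free rG.
  by rewrite mulmx_free_eq0 // nz_row_eq0.
- exact: submxMl.
- move=> j jS; have := @mul_colsubset u S (enum_rank_in jS j).
  by rewrite enum_rankK_in // -/M uM mxE.
Qed.

Lemma codeword_rk_lt (S : {set 'I_n}) c : \rank G = k -> c != 0 -> is_codeword G c ->
  (forall j, j \in S -> c 0 j = 0) -> (rk S < k)%N.
Proof.
move=> rG cnz /submxP [u cE] van.
rewrite ltn_neqAle rk_le_k andbT; apply/negP => /eqP rS.
have fr : row_free (colsubset G S) by rewrite /row_free -/(rk S) rS.
have : u *m colsubset G S == 0.
  apply/eqP/matrixP => a i; rewrite ord1 mul_colsubset -cE van ?mxE //.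
  exact: enum_valP.
rewrite mulmx_free_eq0 // => /eqP u0.
by move: cnz; rewrite cE u0 mul0mx eqxx.
Qed.

Lemma wt_le (c : 'rV['F_2]_n) : (wt c <= n)%N.
Proof. by rewrite /wt (leq_trans (max_card _)) // card_ord. Qed.

Lemma dmin_le (c : 'rV['F_2]_n) : c != 0 -> is_codeword G c -> (dmin G <= wt c)%N.
Proof.
move=> cnz cw; rewrite /dmin leqNgt; apply/negP => lt.
have := before_find 0%N lt; rewrite nth_iota ?ltnS ?wt_le // add0n.
by move/negbT/negP; apply; apply/existsP; exists c; rewrite cnz cw eqxx.
Qed.

Lemma dmin_ex : (dmin G <= n)%N ->
  exists c, [/\ c != 0, is_codeword G c & wt c = dmin G].
Proof.
rewrite /dmin => le.
have hs : has (fun d => [exists c : 'rV['F_2]_n, [&& c != 0, is_codeword G c & wt c == d]])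
  (iota 0 n.+1) by rewrite has_find size_iota ltnS.
have := nth_find 0%N hs; rewrite nth_iota ?ltnS // add0n.
by case/existsP => c /and3P [? ? /eqP ?]; exists c.
Qed.

End Code.

Local Close Scope ring_scope.
Import GRing.Theory.

Section Info.
Variables (k n : nat) (G : 'M['F_2]_(k, n)).

Lemma cardC_ord (T : {set 'I_n}) : #|~: T| = n - #|T|.
Proof. by rewrite -[X in X - _](card_ord n) -(cardsC T) addKn. Qed.

Lemma info_double m : (n - m) * info G m <= m.+1 * info G m.+1.
Proof.
rewrite /info !big_distrr /=.
have L : \sum_(T : {set 'I_n} | #|T| == m) (n - m) * rk G T =
         \sum_(T : {set 'I_n} | #|T| == m) \sum_(j in ~: T) rk G T.
  by apply: eq_bigr => T /eqP cT; rewrite sum_nat_const cardC_ord cT.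
have R : \sum_(S : {set 'I_n} | #|S| == m.+1) \sum_(j in S) rk G (S :\ j) <=
         \sum_(S : {set 'I_n} | #|S| == m.+1) m.+1 * rk G S.
  apply: leq_sum => S /eqP cS; rewrite -{1}cS -sum_nat_const.
  by apply: leq_sum => j _; apply: rk_mono; apply: subD1set.
rewrite L; apply: leq_trans R; apply: eq_leq.
rewrite (exchange_big_dep predT) //= [RHS](exchange_big_dep predT) //=.
apply: eq_bigr => j _.
rewrite (reindex_onto (fun S => S :\ j) (fun T => j |: T)) /=; last first.
  by move=> T /andP [_]; rewrite in_setC => jT; rewrite setU1K.
apply: eq_bigl => S.
case jS: (j \in S).
  rewrite setD1K // eqxx in_setC setD11 andbT /=.
  by rewrite (cardsD1 j S) jS add1n eqSS.
rewrite andbF; apply/negbTE; apply/negP => /andP [_ /eqP E].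
by move: jS; rewrite -E setU11.
Qed.


Lemma sum_card_const m c :
  \sum_(S : {set 'I_n} | #|S| == m) c = 'C(n, m) * c.
Proof.
rewrite -[n in 'C(n, _)](card_ord n) -card_draws -sum_nat_const.
by apply: eq_bigl => S; rewrite inE.
Qed.

Lemma info0 : info G 0 = 0.
Proof.
rewrite /info big1 // => S /eqP cS; apply/eqP; rewrite -leqn0.
by apply: leq_trans (rk_le_card G S) _; rewrite cS.
Qed.

Lemma info1_pos (j0 : 'I_n) : no_idle G -> 0 < info G 1.
Proof.
move=> ni; rewrite /info (bigD1 [set j0]) ?cards1 //=.
apply: leq_trans (leq_addr _ _); rewrite lt0n mxrank_eq0.
apply/negP => /eqP Z.
have := @col_colsubset k n G [set j0] (enum_rank_in (set11 j0) j0).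
rewrite enum_rankK_in ?set11 // Z col0 => E.
by move: (ni j0); rewrite -E eqxx.
Qed.

Lemma wt_sub (c : 'rV['F_2]_n) (S : {set 'I_n}) :
  (forall j, j \in S -> c 0%R j = 0%R) -> wt c <= #|~: S|.
Proof.
move=> van; apply: subset_leq_card; apply/subsetP => j.
rewrite !inE; apply: contra => jS; by rewrite van.
Qed.

Lemma info_top : \rank G = k -> 2 <= dmin G -> 1 <= n -> info G (n - 1) = n * k.
Proof.
move=> rG dG n1.
rewrite /info (eq_bigr (fun _ => k)); last first.
  move=> S /eqP cS; rewrite -/(rk G S).
  suff H : ~~ (rk G S < k) by apply/eqP; rewrite eqn_leq rk_le_k leqNgt H.
  apply/negP => /(rk_lt_codeword rG) [c [cnz cw van]].
  have := leq_trans dG (leq_trans (dmin_le cnz cw) (wt_sub van)).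
  by rewrite cardC_ord cS subKn.
by rewrite sum_card_const bin_sub // bin1.
Qed.

Lemma info_sub2 : \rank G = k -> 2 <= dmin G -> 2 <= n ->
  info G (n - 2) + Bw G 2 <= 'C(n, 2) * k.
Proof.
move=> rG dG n2.
set Bad := [set T : {set 'I_n} | (#|T| == n - 2) && (rk G T < k)].
have B1 : Bw G 2 <= #|Bad|.
  rewrite /Bw -(card_in_imset (f := fun c : 'rV['F_2]_n => ~: [set j | c 0%R j != 0%R])).
    apply: subset_leq_card; apply/subsetP => T /imsetP [c]; rewrite inE.
    move=> /andP [cw /eqP w2] ->; rewrite inE cardC_ord -/(wt c) w2 eqxx /=.
    apply: (codeword_rk_lt rG _ cw).
      apply/negP => /eqP c0; move: w2; rewrite c0 /wt.
      suff -> : [set j : 'I_n | (0%R : 'rV['F_2]_n) 0%R j != 0%R] = set0 by rewrite cards0.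
      by apply/setP => j; rewrite !inE mxE eqxx.
    by move=> j; rewrite !inE negbK => /eqP.
  move=> c c'; rewrite !inE => _ _ E; apply/matrixP => a j; rewrite !ord1.
  have := congr1 (fun A : {set 'I_n} => j \in A) E; rewrite /= !inE.
  case: (eqVneq (c 0%R j) 0%R) => [->|nz]; case: (eqVneq (c' 0%R j) 0%R) => [->|nz'] //=.
  by rewrite (F2_nz1 nz) (F2_nz1 nz').
have B2 : #|Bad| = \sum_(T : {set 'I_n} | #|T| == n - 2) (rk G T < k).
  rewrite -sum1_card big_mkcond [RHS]big_mkcond /=; apply: eq_bigr => T _.
  by rewrite inE; case: (#|T| == n - 2); case: (rk G T < k).
apply: leq_trans (leq_add (leqnn _) B1) _.
rewrite B2 /info -big_split /= -(bin_sub n2) -sum_card_const.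
apply: leq_sum => T _; have := rk_le_k G T.
case: ltnP => lt H; first by rewrite addn1.
by rewrite /= addn0.
Qed.

Lemma info_a1 : \rank G = k -> 2 <= dmin G -> 2 <= n ->
  2 * info G (n - 1 - 1) + 2 * Bw G 2 <= (n - 1) * info G (n - 1).
Proof.
move=> rG dG n2.
rewrite info_top ?(ltnW n2) //.
have -> : n - 1 - 1 = n - 2 by rewrite -subnDA.
rewrite -mulnDr.
have := info_sub2 rG dG n2; set X := info G (n - 2) + Bw G 2 => HX.
apply: leq_trans (leq_mul (leqnn 2) HX) _.
have C : 'C(n, 2) * 2 = n * (n - 1).
  by rewrite (bin_ffact n 2) ffactnS ffactn1 subn1.
rewrite mulnA [2 * _]mulnC C.
by rewrite mulnA [(n - 1) * n]mulnC.
Qed.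

End Info.

Section Dmin2.
Variables (k n : nat) (G : 'M['F_2]_(k, n)).

Lemma dmin_le_size : dmin G <= n.+1.
Proof. by rewrite /dmin; apply: leq_trans (find_size _ _) _; rewrite size_iota. Qed.

Lemma dmin2_facts : no_idle G -> dmin G = 2 -> [/\ 2 <= n, 0 < Bw G 2 & 0 < k].
Proof.
move=> ni d2.
have n2 : 2 <= n.
  rewrite leqNgt; apply/negP => n1.
  have n0 : 0 < n by have := dmin_le_size; rewrite d2.
  have Gnz : G != 0%R.
    apply/negP => /eqP G0; move: (ni (Ordinal n0)); rewrite G0.
    by rewrite col0 eqxx.
  have := dmin_le (c := nz_row G) _ (nz_row_sub G).
  rewrite nz_row_eq0 Gnz d2 => /(_ isT) H.
  by have := leq_trans H (wt_le (nz_row G)); rewrite leqNgt n1.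
have [c [cnz cw wc]] := dmin_ex (n := n) (G := G) ltac:(by rewrite d2).
split => //.
  rewrite /Bw card_gt0; apply/set0Pn; exists c; rewrite inE cw wc d2 eqxx.
  done.
rewrite lt0n; apply/negP => /eqP k0.
move: cw cnz; rewrite /is_codeword.
suff -> : G = 0%R by move=> /submx0null ->; rewrite eqxx.
by apply/matrixP => i j; have := ltn_ord i; rewrite {2}k0.
Qed.

End Dmin2.
Import GRing.Theory.

Section Rep.
Variable m : nat.
Local Notation J := (const_mx (GRing.one 'F_2) : 'M['F_2]_(1, m)).

Lemma rep_cw (c : 'rV['F_2]_m) : is_codeword J c -> c = 0%R \/ c = J.
Proof.
case/submxP => u ->.
case: (eqVneq (u 0%R 0%R) 0%R) => [u0|unz].
  left; apply/matrixP => i j; rewrite !mxE big_ord1 ord1 u0 mul0r.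
  by rewrite ?mxE.
right; apply/matrixP => i j; rewrite !mxE big_ord1 ord1 (F2_nz1 unz) ?mxE.
by rewrite ?mulr1 ?mxE.
Qed.

Lemma wt_J : wt J = m.
Proof.
rewrite /wt -[RHS](card_ord m); apply: eq_card => j.
by rewrite !inE mxE oner_neq0.
Qed.

Lemma wt_0 : wt (0%R : 'rV['F_2]_m) = 0.
Proof.
rewrite /wt; apply/eqP; rewrite cards_eq0; apply/eqP/setP => j.
by rewrite !inE mxE eqxx.
Qed.

Lemma J_cw : is_codeword J J.
Proof. exact: submx_refl. Qed.

Lemma J_nz : 0 < m -> J != 0%R.
Proof.
move=> m0; apply/negP => /eqP/matrixP/(_ 0%R (Ordinal m0)).
by rewrite !mxE; apply/eqP; rewrite oner_neq0.
Qed.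

Lemma rank_J : 0 < m -> \rank J = 1.
Proof.
move=> m0; apply/eqP; rewrite eqn_leq rank_leq_row lt0n mxrank_eq0 J_nz //.
Qed.

Lemma noidle_J : no_idle J.
Proof.
move=> j; apply/negP => /eqP/matrixP/(_ 0%R 0%R).
by rewrite !mxE; apply/eqP; rewrite oner_neq0.
Qed.

Lemma dmin_J : 2 <= m -> dmin J = m.
Proof.
move=> m2; apply/eqP; rewrite eqn_leq.
have D : dmin J <= wt J by apply: dmin_le (J_nz _) J_cw; apply: ltnW.
rewrite wt_J in D; rewrite D /=.
rewrite leqNgt; apply/negP => lt.
have [c [cnz cw wc]] := dmin_ex (ltnW lt).
case: (rep_cw cw) => E; first by move: cnz; rewrite E eqxx.
by move: lt; rewrite -wc E wt_J ltnn.
Qed.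

Lemma Bw_J : 2 <= m -> Bw J 2 = (m == 2).
Proof.
move=> m2; rewrite /Bw.
case: eqP => [m2e|mne].
  suff -> : [set c : 'rV['F_2]_m | is_codeword J c && (wt c == 2)] = [set J] by rewrite cards1.
  apply/setP => c; rewrite !inE.
  apply/andP/eqP => [[cw /eqP w2]|->]; last by rewrite J_cw wt_J m2e.
  case: (rep_cw cw) => // E; by move: w2; rewrite E wt_0.
apply/eqP; rewrite cards_eq0; apply/eqP/setP => c; rewrite !inE.
apply/negP => /andP [cw /eqP w2].
case: (rep_cw cw) => E; move: w2; rewrite E ?wt_0 ?wt_J //.
Qed.

End Rep.

Local Open Scope R_scope.

Lemma Rplus_assoc' : associative Rplus.
Proof. by move=> x y z; rewrite Rplus_assoc. Qed.
HB.instance Definition _ := Monoid.isComLaw.Build R R0 Rplus Rplus_assoc' Rplus_comm Rplus_0_l.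

Lemma Rsum_ge0 m (F : 'I_m -> R) : (forall i, 0 <= F i) -> 0 <= Rsum F.
Proof. by move=> H; rewrite /Rsum; apply: (big_ind (fun x => 0 <= x)) => //; [lra | move=> *; lra]. Qed.

Lemma Rsum_le m (F F' : 'I_m -> R) : (forall i, F i <= F' i) -> Rsum F <= Rsum F'.
Proof. by move=> H; rewrite /Rsum; apply: (big_ind2 Rle) => //; [lra| move=> *; lra]. Qed.

Lemma Rsum_scal m (F : 'I_m -> R) c : Rsum (fun i => c * F i) = c * Rsum F.
Proof.
rewrite /Rsum; apply: (big_ind2 (fun x y => x = c * y)) => //; first by ring.
by move=> x1 x2 y1 y2 -> ->; ring.
Qed.

Lemma Rsum_ge1 m (F : 'I_m -> R) i0 : (forall i, 0 <= F i) -> F i0 <= Rsum F.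
Proof.
move=> H; rewrite /Rsum (bigD1 i0) //=.
have : 0 <= \big[Rplus/R0]_(i < m | i != i0) F i.
  by apply: (big_ind (fun x => 0 <= x)) => //; [lra | move=> *; lra].
move=> h; have := Rplus_le_compat_l (F i0) _ _ h; rewrite Rplus_0_r; exact.
Qed.

Lemma Rsum_ext m (F F' : 'I_m -> R) : (forall i, F i = F' i) -> Rsum F = Rsum F'.
Proof. by move=> H; rewrite /Rsum; apply: eq_bigr => i _. Qed.

Lemma bernoulli_low p m : 0 <= p <= 1 -> 1 - INR m * p <= (1 - p) ^ m.
Proof.
move=> Hp; elim: m => [|m IH]; first by simpl; lra.
rewrite S_INR; change ((1 - p) ^ (S m)) with ((1 - p) * (1 - p) ^ m).
have H1 : 0 <= 1 - p by lra.
have : (1 - p) * (1 - INR m * p) <= (1 - p) * (1 - p) ^ m by apply: Rmult_le_compat_l.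
have : 0 <= INR m by apply: pos_INR.
nra.
Qed.

Lemma pow_one_pos p m : 0 < p -> 0 < p ^ m.
Proof. move=> Hp; exact: pow_lt. Qed.

Lemma growth_contra (f : R -> R) (u : nat -> R) (d mu : R) :
  0 < d -> 1 < mu -> (forall l, 0 < u l) -> (forall l, u (S l) = f (u l)) ->
  (forall p, 0 < p < d -> mu * p <= f p) -> ~ Un_cv u 0.
Proof.
move=> d0 mu1 upos ustep grow cv.
have [L HL] := cv d d0.
have Hin : forall l, (l >= L)%coq_nat -> 0 < u l < d.
  move=> l Hl; have := HL l Hl; rewrite /R_dist Rminus_0_r.
  have := upos l; move=> h1 h2; rewrite Rabs_right in h2; lra.
have Hg : forall m, (1 + INR m * (mu - 1)) * u L <= u (L + m)%nat.
  elim => [|m IH]; first by rewrite addn0 /=; lra.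
  rewrite addnS ustep.
  have := grow _ (Hin (L + m)%nat (leP (leq_addr m L))).
  move=> hg; have := upos L; have := pos_INR m; rewrite S_INR => hm hu.
  have h1 : mu * ((1 + INR m * (mu - 1)) * u L) <= mu * u (L + m)%nat.
    apply: Rmult_le_compat_l => //; lra.
  have h2 : 0 <= INR m * (mu - 1) * (mu - 1) * u L.
    apply: Rmult_le_pos; last lra; apply: Rmult_le_pos; last lra.
    apply: Rmult_le_pos; lra.
  nra.
have [m Hm] : exists m : nat, d / ((mu - 1) * u L) < INR m.
  have [Hz1 Hz2] := archimed (d / ((mu - 1) * u L)).
  set z := up _ in Hz1 Hz2 *.
  have hz : Z.le 0 z.
    apply: le_IZR; have : 0 < d / ((mu - 1) * u L).
      apply: Rdiv_lt_0_compat => //; apply: Rmult_lt_0_compat; [lra | exact: upos].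
    lra.
  exists (Z.to_nat z); rewrite INR_IZR_INZ Z2Nat.id //.
have := Hg m; have := Hin (L + m)%nat (leP (leq_addr m L)).
have uL := upos L.
have Hm' : d < INR m * ((mu - 1) * u L).
  have hp : 0 < (mu - 1) * u L by apply: Rmult_lt_0_compat; lra.
  have := Rmult_lt_compat_r _ _ _ hp Hm.
  by rewrite /Rdiv Rmult_assoc Rinv_l ?Rmult_1_r; lra.
nra.
Qed.


Section PhiSec.
Variables (theta k : nat) (n : 'I_theta -> nat)
  (Gm : forall h : 'I_theta, 'M['F_2]_(k, n h)) (Lam : 'I_theta -> R).

Definition Aterm h (t : 'I_(n h)) : R :=
  INR ((n h - t) * info (Gm h) (n h - t)) - INR ((t + 1) * info (Gm h) (n h - 1 - t)).

Definition inner h p : R :=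
  Rsum (fun t : 'I_(n h) => p ^ t * (1 - p) ^ (n h - 1 - t) * Aterm t).

Lemma Phi_unfold p : Phi Gm Lam p = Rsum (fun h => Lam h * inner h p).
Proof. by []. Qed.

Lemma Aterm_ge0 h t : 0 <= Aterm (h := h) t.
Proof.
have := info_double (Gm h) (n h - 1 - t).
have lt := ltn_ord t.
have -> : (n h - (n h - 1 - t) = t + 1)%N by lia.
have -> : ((n h - 1 - t).+1 = n h - t)%N by lia.
move/leP/le_INR; rewrite /Aterm; lra.
Qed.

Lemma term_ge0 h p (t : 'I_(n h)) : 0 <= p <= 1 ->
  0 <= p ^ t * (1 - p) ^ (n h - 1 - t) * Aterm t.
Proof.
move=> Hp; apply: Rmult_le_pos; last exact: Aterm_ge0.
apply: Rmult_le_pos; apply: pow_le; lra.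
Qed.

Lemma inner_ge0 h p : 0 <= p <= 1 -> 0 <= inner h p.
Proof. by move=> Hp; apply: Rsum_ge0 => t; apply: term_ge0. Qed.

Lemma inner_pos h p : 0 < p <= 1 -> (1 <= n h)%N -> no_idle (Gm h) -> 0 < inner h p.
Proof.
move=> Hp n1 ni.
have tlt : (n h - 1 < n h)%N by lia.
set t := Ordinal tlt.
apply: Rlt_le_trans (@Rsum_ge1 _ _ t (fun t => term_ge0 t (conj (Rlt_le _ _ (proj1 Hp)) (proj2 Hp)))).
rewrite /Aterm /=.
have -> : (n h - 1 - (n h - 1) = 0)%N by lia.
have -> : (n h - (n h - 1) = 1)%N by lia.
rewrite info0 muln0 /= Rminus_0_r Rmult_1_r mul1n.
apply: Rmult_lt_0_compat; first exact: pow_lt (proj1 Hp).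
by apply: lt_0_INR; apply/ltP; apply: info1_pos (Ordinal n1) ni.
Qed.

Lemma inner_lin h p N : 0 <= p <= 1 -> \rank (Gm h) = k -> (2 <= dmin (Gm h))%N ->
  no_idle (Gm h) -> dmin (Gm h) = 2%N -> INR (n h) <= N ->
  2 * INR (Bw (Gm h) 2) * (p * (1 - N * p)) <= inner h p.
Proof.
move=> Hp rG dG ni d2 HN.
have [n2 _ _] := dmin2_facts ni d2.
have tlt : (1 < n h)%N by [].
set t := Ordinal tlt.
apply: Rle_trans (@Rsum_ge1 _ _ t (fun t => term_ge0 t Hp)).
rewrite /Aterm /=.
have HA := info_a1 rG dG n2.
have HA' : INR (2 * info (Gm h) (n h - 1 - 1)) + INR (2 * Bw (Gm h) 2) <=
           INR ((n h - 1) * info (Gm h) (n h - 1)).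
  rewrite -plus_INR; apply: le_INR; apply/leP; exact: HA.
have E2 : INR (2 * Bw (Gm h) 2) = 2 * INR (Bw (Gm h) 2) by rewrite mult_INR; simpl; ring.
rewrite E2 in HA'.
have Hb := bernoulli_low (n h - 1 - 1) Hp.
have HI : INR (n h - 1 - 1) <= N.
  apply: Rle_trans HN; apply: le_INR; apply/leP; lia.
have HB0 : 0 <= INR (Bw (Gm h) 2) by apply: pos_INR.
have Hq : 0 <= (1 - p) ^ (n h - 1 - 1) by apply: pow_le; lra.
have H1 : 1 - N * p <= (1 - p) ^ (n h - 1 - 1) by nra.
rewrite Rmult_1_r.
change (1 + 1)%N with 2%N. have : 2 * INR (Bw (Gm h) 2) <= INR ((n h - 1) * info (Gm h) (n h - 1)) -
  INR (2 * info (Gm h) (n h - 1 - 1)) by lra.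
move=> HC.
have : p * (1 - N * p) * (2 * INR (Bw (Gm h) 2)) <= p * (1 - p) ^ (n h - 1 - 1) * (2 * INR (Bw (Gm h) 2)).
  apply: Rmult_le_compat_r; first lra. apply: Rmult_le_compat_l; lra.
have : p * (1 - p) ^ (n h - 1 - 1) * (2 * INR (Bw (Gm h) 2)) <=
  p * (1 - p) ^ (n h - 1 - 1) * (INR ((n h - 1) * info (Gm h) (n h - 1)) -
  INR (2 * info (Gm h) (n h - 1 - 1))).
  apply: Rmult_le_compat_l => //; apply: Rmult_le_pos; lra.
lra.
Qed.

End PhiSec.
Local Open Scope R_scope.

Lemma one_m_exp x : 0 < x -> 0 < 1 - exp (- x) < 1.
Proof.
move=> hx; have := exp_pos (- x); have := exp_increasing (- x) 0 ltac:(lra).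
rewrite exp_0; lra.
Qed.

Lemma exp_bound x y q : 0 <= y -> y <= x -> 0 <= q -> q < 1 -> 1 <= (1 - q) * (1 + y) ->
  q <= 1 - exp (- x).
Proof.
move=> y0 yx q0 q1 H.
have E1 := exp_ineq1_le x.
have E2 : exp (- x) * exp x = 1 by rewrite exp_Ropp Rinv_l //; have := exp_pos x; lra.
have Ep := exp_pos (- x).
have E3 : exp (- x) * (1 + x) <= 1.
  rewrite -E2; apply: Rmult_le_compat_l; lra.
have E4 : exp (- x) * (1 + y) <= 1.
  apply: Rle_trans E3; apply: Rmult_le_compat_l; lra.
have : exp (- x) * (1 + y) <= (1 - q) * (1 + y) by lra.
move=> H5; have : exp (- x) <= 1 - q.
  apply: (Rmult_le_reg_r (1 + y)); lra.
lra.
Qed.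

Theorem part1 :
  (forall (theta k : nat) (n : 'I_theta -> nat)
     (Gm : forall h : 'I_theta, 'M['F_2]_(k, n h)) (Lam : 'I_theta -> R),
     (forall h, \rank (Gm h) = k) ->
     (forall h, no_idle (Gm h)) ->
     (forall h, (2 <= dmin (Gm h))%N) ->
     (forall h, 0 <= Lam h) ->
     Rsum Lam = 1 ->
     (exists h, dmin (Gm h) = 2%N /\ 0 < Lam h) ->
     is_upper_bound (threshold_set Gm Lam) (INR k / (2 * calB2 Gm Lam))).
Proof.
move=> theta k n Gm Lam rG ni dG Lnn Ls1 [h0 [d20 L0]] G0 [G0nn Hcv].
have [n2 B0 k0] := dmin2_facts (ni h0) d20.
set cB := calB2 Gm Lam.
have cBterm : forall h, 0 <= (if dmin (Gm h) == 2%N then Lam h * INR (Bw (Gm h) 2) else 0).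
  move=> h; case: ifP => _; last lra.
  apply: Rmult_le_pos => //; exact: pos_INR.
have cBpos : 0 < cB.
  apply: Rlt_le_trans (@Rsum_ge1 _ _ h0 cBterm).
  rewrite d20 eqxx; apply: Rmult_lt_0_compat => //.
  by apply: lt_0_INR; apply/ltP.
have kpos : 0 < INR k by apply: lt_0_INR; apply/ltP.
case: (Rle_lt_dec G0 (INR k / (2 * cB))) => // r; exfalso.
have bpos : 0 < INR k / (2 * cB) by apply: Rdiv_lt_0_compat; lra.
set a := G0 / INR k.
have apos : 0 < a by apply: Rdiv_lt_0_compat; lra.
set lam := a * (2 * cB).
have lam1 : 1 < lam.
  have H1 : INR k < G0 * (2 * cB).
    have := Rmult_lt_compat_r (2 * cB) _ _ ltac:(lra) r.
    have -> : INR k / (2 * cB) * (2 * cB) = INR k by field; lra.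
    done.
  have -> : lam = G0 * (2 * cB) / INR k by rewrite /lam /a; field; lra.
  apply: (Rmult_lt_reg_r (INR k)) => //.
  have -> : G0 * (2 * cB) / INR k * INR k = G0 * (2 * cB) by field; lra.
  lra.
set N := INR (\sum_(h < theta) n h)%N.
have HN : forall h, INR (n h) <= N.
  move=> h; apply: le_INR; apply/leP.
  by rewrite (bigD1 h) //= leq_addr.
have N0 : 0 <= N by apply: pos_INR.
set Ph := Phi Gm Lam.
have Plow : forall p, 0 <= p <= 1 -> 2 * cB * (p * (1 - N * p)) <= Ph p.
  move=> p Hp; rewrite /Ph Phi_unfold.
  have -> : 2 * cB * (p * (1 - N * p)) = Rsum (fun h => (2 * (p * (1 - N * p))) *
     (if dmin (Gm h) == 2%N then Lam h * INR (Bw (Gm h) 2) else 0)).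
    by rewrite Rsum_scal /cB /calB2; ring.
  apply: Rsum_le => h; case: ifP => [/eqP d2 | _].
    have := inner_lin Hp (rG h) (dG h) (ni h) d2 (HN h).
    have := Lnn h => l0 hi.
    have := Rmult_le_compat_l _ _ _ l0 hi; lra.
  rewrite Rmult_0_r; apply: Rmult_le_pos => //; exact: inner_ge0.
have Ppos : forall p, 0 < p <= 1 -> 0 < Ph p.
  move=> p Hp; rewrite /Ph Phi_unfold.
  have tge : forall h, 0 <= Lam h * inner Gm h p.
    by move=> h; apply: Rmult_le_pos => //; apply: inner_ge0; lra.
  apply: Rlt_le_trans (@Rsum_ge1 _ _ h0 tge).
  apply: Rmult_lt_0_compat => //; apply: inner_pos; [exact: Hp | exact: ltnW n2 | exact: ni].
set u := pseq Gm Lam G0.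
have ustep : forall l, u (S l) = (fun p => 1 - exp (- (G0 / INR k) * Ph p)) (u l) by [].
have nbpos : 0 < nbar n Lam.
  have tge : forall h, 0 <= Lam h * INR (n h).
    by move=> h; apply: Rmult_le_pos => //; apply: pos_INR.
  apply: Rlt_le_trans (@Rsum_ge1 _ _ h0 tge).
  apply: Rmult_lt_0_compat => //; apply: lt_0_INR; apply/ltP; lia.
have u01 : forall l, 0 < u l < 1.
  elim => [|l IH].
    rewrite /u /=; apply: one_m_exp; apply: Rdiv_lt_0_compat; first lra.
    exact: Rdiv_lt_0_compat.
  rewrite ustep /=; rewrite -Ropp_mult_distr_l; apply: one_m_exp.
  apply: Rmult_lt_0_compat => //; apply: Ppos; lra.
set mu := (1 + lam) / 2.
set d := Rmin 1 ((lam - mu) / (lam * (N + mu))).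
have dpos : 0 < d.
  apply: Rmin_glb_lt; first lra.
  apply: Rdiv_lt_0_compat; first (rewrite /mu; lra).
  apply: Rmult_lt_0_compat; rewrite /mu; lra.
apply: (growth_contra (f := fun p => 1 - exp (- (G0 / INR k) * Ph p)) (d := d) (mu := mu) dpos _ (fun l => proj1 (u01 l)) ustep _ Hcv).
  rewrite /mu; lra.
move=> p [p0 pd].
have p1 : p < 1 by have := Rmin_l 1 ((lam - mu) / (lam * (N + mu))); rewrite -/d; lra.
have pd2 : lam * (N + mu) * p <= lam - mu.
  have := Rmin_r 1 ((lam - mu) / (lam * (N + mu))); rewrite -/d => h.
  have hp : 0 < lam * (N + mu) by apply: Rmult_lt_0_compat; rewrite /mu; lra.
  have : p <= (lam - mu) / (lam * (N + mu)) by lra.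
  move=> h2; have := Rmult_le_compat_l _ _ _ (Rlt_le _ _ hp) h2.
  have -> : lam * (N + mu) * ((lam - mu) / (lam * (N + mu))) = lam - mu.
    by rewrite /Rdiv Rmult_comm Rmult_assoc Rinv_l ?Rmult_1_r //; lra.
  lra.
have mu1 : 1 < mu by rewrite /mu; lra.
have mulam : mu < lam by rewrite /mu; lra.
have Hmp : mu * p < 1.
  have : lam * mu * p <= lam * (N + mu) * p by apply: Rmult_le_compat_r; [lra | apply: Rmult_le_compat_l; lra].
  move=> h; have : lam * (mu * p) < lam * 1 by nra.
  move=> h2; apply: (Rmult_lt_reg_l lam); lra.
set y := lam * (p * (1 - N * p)).
have Hy : y * (1 - mu * p) >= mu * p.
  rewrite /y.
  have : (1 - N * p) * (1 - mu * p) >= 1 - (N + mu) * p.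
    have : 0 <= N * p * (mu * p) by apply: Rmult_le_pos; apply: Rmult_le_pos; lra.
    nra.
  move=> h.
  have : lam * p * ((1 - N * p) * (1 - mu * p)) >= lam * p * (1 - (N + mu) * p).
    apply: Rle_ge; apply: Rmult_le_compat_l; [apply: Rmult_le_pos; lra | lra].
  nra.
have y0 : 0 <= y.
  have : 0 <= mu * p by apply: Rmult_le_pos; lra.
  nra.
rewrite -Ropp_mult_distr_l.
apply: exp_bound y0 _ _ _ _.
- rewrite /y /lam -/a Rmult_assoc; apply: Rmult_le_compat_l; [lra|].
  apply: Plow; lra.
- apply: Rmult_le_pos; lra.
- lra.
- nra.
Qed.

Lemma irsa2 theta (h i2 : 'I_theta) : nat_of_ord i2 = 0%N ->
  (irsa_len h == 2%N) = (h == i2).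
Proof.
move=> i20; rewrite /irsa_len -(inj_eq val_inj) /= i20.
by rewrite -[X in _ == X]add0n eqn_add2r.
Qed.

Theorem part2 :
  (forall (theta : nat) (Lam : 'I_theta -> R) (i2 : 'I_theta),
     nat_of_ord i2 = 0%N ->
     (forall h, 0 <= Lam h) ->
     Rsum Lam = 1 ->
     0 < Lam i2 ->
     is_upper_bound (threshold_set (@rep_code theta) Lam) (1 / (2 * Lam i2))).
Proof.
move=> theta Lam i2 i20 Lnn Ls1 L0.
have m2 : forall h : 'I_theta, (2 <= irsa_len h)%N.
  by move=> h; rewrite /irsa_len leq_addl.
have hr : forall h, \rank (@rep_code theta h) = 1%N.
  by move=> h; apply: rank_J; apply: ltnW.
have hn : forall h, no_idle (@rep_code theta h) by move=> h; apply: noidle_J.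
have hd : forall h, (2 <= dmin (@rep_code theta h))%N.
  by move=> h; rewrite /rep_code dmin_J.
have he : exists h, dmin (@rep_code theta h) = 2%N /\ 0 < Lam h.
  exists i2; split => //; rewrite /rep_code dmin_J //.
  by apply/eqP; rewrite (irsa2 _ i20).
have H := @part1 theta 1 (@irsa_len theta) (@rep_code theta) Lam hr hn hd Lnn Ls1 he.
have cB : calB2 (@rep_code theta) Lam = Lam i2.
  rewrite /calB2 (@Rsum_ext _ _ (fun h => if h == i2 then Lam h else 0)).
    rewrite /Rsum (bigD1 i2) //= eqxx big1 => [|h /negbTE -> //]; ring.
  move=> h; rewrite /rep_code dmin_J // Bw_J // (irsa2 _ i20).
  by case: (h == i2) => /=; ring.
by rewrite cB in H.
Qed.

Theorem mainTheorem6 :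
  (forall (theta k : nat) (n : 'I_theta -> nat)
     (Gm : forall h : 'I_theta, 'M['F_2]_(k, n h)) (Lam : 'I_theta -> R),
     (forall h, \rank (Gm h) = k) ->
     (forall h, no_idle (Gm h)) ->
     (forall h, (2 <= dmin (Gm h))%N) ->
     (forall h, 0 <= Lam h) ->
     Rsum Lam = 1 ->
     (exists h, dmin (Gm h) = 2%N /\ 0 < Lam h) ->
     is_upper_bound (threshold_set Gm Lam) (INR k / (2 * calB2 Gm Lam)))
  /\
  (forall (theta : nat) (Lam : 'I_theta -> R) (i2 : 'I_theta),
     nat_of_ord i2 = 0%N ->
     (forall h, 0 <= Lam h) ->
     Rsum Lam = 1 ->
     0 < Lam i2 ->
     is_upper_bound (threshold_set (@rep_code theta) Lam) (1 / (2 * Lam i2))).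
Proof. split; [exact: part1 | exact: part2]. Qed.
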